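(* Let $f_1,\dots,f_n:\mathbb{R}^p\to\mathbb{R}$ be continuously differentiable and $L$-smooth, let $g=\frac1n\sum_if_i\in\mathcal S(m,L)$ with $m>0$ and minimizer $x^*$, and let $i_k$ be sampled IID uniformly from $\{1,\dots,n\}$. Let $\gamma=-m$ if every $f_i\in\mathcal F(m,L)$, $\gamma=0$ if every $f_i\in\mathcal F(0,L)$, and $\gamma=L$ if the $f_i$ are only assumed $L$-smooth. Consider Finito with stepsize $\alpha>0$ and define $v^k=\frac1n\sum_{i=1}^nx_i^k-\alpha\sum_{i=1}^ny_i^k$. Given any testing rate with $1-\frac1n\le\rho^2\le1$, if there exist positive scalars $p_1,p_4$ and nonnegative scalars $\lambda_1,\lambda_2$ such that $$\alpha^2-2\lambda_2+p_1<0,$$ $$n(1-\rho^2)p_1-p_1+2\alpha^2-\frac{2\alpha^4}{\alpha^2-2\lambda_2+p_1}\le0,$$ $$n(1-\rho^2)p_4-p_4+\frac2{n^2}-\frac{2\alpha^2}{n^2(\alpha^2-2\lambda_2+p_1)}\le0,$$ $$p_4-\rho^2+2L\gamma\lambda_2-2Lm\lambda_1+1-\frac{((L+m)\lambda_1+(L-\gamma)\lambda_2-\alpha)^2}{\alpha^2-2\lambda_1-2\lambda_2+p_1}\le0,$$ then Finito with any initial $x_i^0,y_i^0\in\mathbb{R}^p$ satisfies $$\mathbb{E}\left[p_4\sum_{i=1}^n\|x_i^k-x^*\|^2+p_1\sum_{i=1}^n\|y_i^k-\nabla f_i(x^* )\|^2+\|v^k-x^*\|^2\right]\le\rho^{2k}R^0,$$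 where $R^0=p_4\sum_i\|x_i^0-x^*\|^2+p_1\sum_i\|y_i^0-\nabla f_i(x^* )\|^2+\|v^0-x^*\|^2$.
   Context: A continuously differentiable $f:\mathbb{R}^p\to\mathbb{R}$ is $L$-smooth if $\|\nabla f(x)-\nabla f(y)\|\le L\|x-y\|$; $\mathcal F(m,L)$ denotes the continuously differentiable, $L$-smooth, $m$-strongly convex functions; $\mathcal F(0,L)$ the convex $L$-smooth ones. $\mathcal S(m,L)$ is the set of continuously differentiable $g$ with a unique $x^*$ such that $\nabla g(x^* )=0$ and, for all $x$, $\begin{bmatrix}x-x^*\\\nabla g(x)\end{bmatrix}^T\begin{bmatrix}-2mLI_p&(L+m)I_p\\(L+m)I_p&-2I_p\end{bmatrix}\begin{bmatrix}x-x^*\\\nabla g(x)\end{bmatrix}\ge0$. Finito: at step $k$, $x_i^{k+1}=\frac1n\sum_{j=1}^nx_j^k-\alpha\sum_{j=1}^ny_j^k$ if $i=i_k$ and $x_i^{k+1}=x_i^k$ otherwise; then $y_i^{k+1}=\nabla f_i(x_i^{k+1})$ if $i=i_k$ and $y_i^{k+1}=y_i^k$ otherwise. Expectation is over the random indices. *)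

(* Defs.v *)
From HB Require Import structures.
From mathcomp Require Import all_boot all_order all_algebra.
From mathcomp Require Import all_classical all_reals all_analysis.
Set Implicit Arguments. Unset Strict Implicit. Unset Printing Implicit Defensive.
Import Order.TTheory GRing.Theory Num.Theory.
Import numFieldNormedType.Exports.
Local Open Scope ring_scope.

Definition dotv (R : realType) (p : nat) (u v : 'rV[R]_p) : R :=
  \sum_(j < p) u 0 j * v 0 j.
Definition sqnorm (R : realType) (p : nat) (u : 'rV[R]_p) : R := dotv u u.
Definition enorm (R : realType) (p : nat) (u : 'rV[R]_p) : R :=
  Num.sqrt (sqnorm u).

Definition is_gradient (R : realType) (p : nat)
  (f : 'rV[R]_p -> R) (gf : 'rV[R]_p -> 'rV[R]_p) : Prop :=
  forall x, differentiable f x /\ forall h, 'd f x h = dotv (gf x) h.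

Definition C1_grad (R : realType) (p : nat)
  (f : 'rV[R]_p -> R) (gf : 'rV[R]_p -> 'rV[R]_p) : Prop :=
  is_gradient f gf /\ continuous gf.

Definition L_smooth (R : realType) (p : nat) (L : R)
  (gf : 'rV[R]_p -> 'rV[R]_p) : Prop :=
  forall x y, enorm (gf x - gf y) <= L * enorm (x - y).

Definition strongly_convex (R : realType) (p : nat) (m : R)
  (f : 'rV[R]_p -> R) : Prop :=
  forall (x y : 'rV[R]_p) (t : R), 0 <= t -> t <= 1 ->
    f ((1 - t) *: x + t *: y)
      <= (1 - t) * f x + t * f y - m / 2 * t * (1 - t) * sqnorm (x - y).

Inductive fclass := StronglyConvexClass | ConvexClass | SmoothOnlyClass.

Definition class_gamma (R : realType) (m L : R) (c : fclass) : R :=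
  match c with
  | StronglyConvexClass => - m
  | ConvexClass => 0
  | SmoothOnlyClass => L
  end.

Definition in_class (R : realType) (p : nat) (m L : R) (c : fclass)
  (f : 'rV[R]_p -> R) (gf : 'rV[R]_p -> 'rV[R]_p) : Prop :=
  C1_grad f gf /\ L_smooth L gf /\
  match c with
  | StronglyConvexClass => strongly_convex m f
  | ConvexClass => strongly_convex 0 f
  | SmoothOnlyClass => True
  end.

(* g in S(m,L), expressed through the gradient gg of g, with xstar the
   unique stationary point. *)
Definition in_S (R : realType) (p : nat) (m L : R)
  (gg : 'rV[R]_p -> 'rV[R]_p) (xstar : 'rV[R]_p) : Prop :=
  gg xstar = 0 /\ (forall x, gg x = 0 -> x = xstar) /\
  forall x,
    0 <= - (2 * m * L) * sqnorm (x - xstar)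
         + 2 * (L + m) * dotv (x - xstar) (gg x)
         - 2 * sqnorm (gg x).

Definition finito_v (R : realType) (n p : nat) (alpha : R)
  (x y : 'I_n -> 'rV[R]_p) : 'rV[R]_p :=
  n%:R^-1 *: (\sum_(j < n) x j) - alpha *: (\sum_(j < n) y j).

Definition finito_step (R : realType) (n p : nat) (alpha : R)
  (gf : 'I_n -> 'rV[R]_p -> 'rV[R]_p)
  (st : ('I_n -> 'rV[R]_p) * ('I_n -> 'rV[R]_p)) (i : 'I_n)
  : ('I_n -> 'rV[R]_p) * ('I_n -> 'rV[R]_p) :=
  let x := st.1 in let y := st.2 in
  let z := finito_v alpha x y in
  let x' := fun j => if j == i then z else x j in
  let y' := fun j => if j == i then gf i (x' i) else y j in
  (x', y').

Definition finito_iter (R : realType) (n p : nat) (alpha : R)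
  (gf : 'I_n -> 'rV[R]_p -> 'rV[R]_p) (x0 y0 : 'I_n -> 'rV[R]_p)
  (s : seq 'I_n) : ('I_n -> 'rV[R]_p) * ('I_n -> 'rV[R]_p) :=
  foldl (finito_step alpha gf) (x0, y0) s.

(* Expectation over k IID uniform indices in {1..n}: the uniform average
   over all k-tuples of indices. *)
Definition expect_iid_uniform (R : realType) (n k : nat)
  (F : seq 'I_n -> R) : R :=
  (n%:R ^+ k)^-1 * \sum_(s : k.-tuple 'I_n) F (tval s).

Definition finito_lyap (R : realType) (n p : nat) (alpha p1 p4 : R)
  (gf : 'I_n -> 'rV[R]_p -> 'rV[R]_p) (xstar : 'rV[R]_p)
  (x y : 'I_n -> 'rV[R]_p) : R :=
  p4 * (\sum_(i < n) sqnorm (x i - xstar))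
  + p1 * (\sum_(i < n) sqnorm (y i - gf i xstar))
  + sqnorm (finito_v alpha x y - xstar).

(* Main.v *)
Require Import Defs.
From HB Require Import structures.
From mathcomp Require Import all_boot all_order all_algebra.
From mathcomp Require Import all_classical all_reals all_analysis.
From mathcomp Require Import ring lra.
Import Order.TTheory GRing.Theory Num.Theory.
Import numFieldNormedType.Exports.
Local Open Scope ring_scope.
Lemma sum_quad (R : realType) (n : nat) (a b u : 'I_n -> R)
  (k1 k2 k3 k4 k5 k6 k7 k8 k9 k10 : R) :
  \sum_i (k1 * (a i * a i) + k2 * (b i * b i) + k3 * (u i * u i)
          + k4 * (a i * b i) + k5 * (a i * u i) + k6 * (b i * u i)
          + k7 * a i + k8 * b i + k9 * u i + k10)
  = k1 * (\sum_i a i * a i) + k2 * (\sum_i b i * b i) + k3 * (\sum_i u i * u i)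
    + k4 * (\sum_i a i * b i) + k5 * (\sum_i a i * u i) + k6 * (\sum_i b i * u i)
    + k7 * (\sum_i a i) + k8 * (\sum_i b i) + k9 * (\sum_i u i) + k10 * n%:R.
Proof.
rewrite !big_split /= -!mulr_sumr sumr_const card_ord.
by rewrite mulr_natr.
Qed.

Lemma sum_cs (R : realType) (n : nat) (z : 'I_n -> R) :
  (0 < n)%N -> (\sum_i z i) ^+ 2 <= n%:R * \sum_i z i * z i.
Proof.
move=> n0.
have nR : 0 < n%:R :> R by rewrite ltr0n.
set m := (\sum_i z i) / n%:R.
have H : 0 <= \sum_i (z i - m) * (z i - m) by apply: sumr_ge0 => i _; rewrite -expr2 sqr_ge0.
have E := @sum_quad R n z z z 1 0 0 0 0 0 (-2 * m) 0 0 (m * m).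
rewrite (eq_bigr (fun i => 1 * (z i * z i) + 0 * (z i * z i) + 0 * (z i * z i) + 0 * (z i * z i)
   + 0 * (z i * z i) + 0 * (z i * z i) + -2 * m * z i + 0 * z i + 0 * z i + m * m)) in H; last first.
  by move=> i _; ring.
rewrite E in H.
have -> : (\sum_i z i) = m * n%:R by rewrite /m divfK // gt_eqF.
have Hm : m * n%:R * (m * n%:R) <= n%:R * (\sum_i z i * z i).
  have : 0 <= n%:R * (1 * (\sum_i z i * z i) + 0 * (\sum_i z i * z i) + 0 * (\sum_i z i * z i)
     + 0 * (\sum_i z i * z i) + 0 * (\sum_i z i * z i) + 0 * (\sum_i z i * z i) +
     -2 * m * (\sum_i z i) + 0 * (\sum_i z i) + 0 * (\sum_i z i) + m * m * n%:R).
    by apply: mulr_ge0 => //; apply: ltW.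
  have -> : (\sum_i z i) = m * n%:R by rewrite /m divfK // gt_eqF.
  move=> h; nra.
by rewrite expr2.
Qed.

Lemma clean (R : realType) (n : nat) (a b u : 'I_n -> R)
  (w alpha rho p1 p4 l1 l2 m L gam : R) :
  (0 < n)%N ->
  1 - n%:R^-1 <= rho ^+ 2 ->
  0 <= l1 ->
  alpha ^+ 2 - 2 * l2 + p1 < 0 ->
  n%:R * (1 - rho ^+ 2) * p1 - p1 + 2 * alpha ^+ 2
    - 2 * alpha ^+ 4 / (alpha ^+ 2 - 2 * l2 + p1) <= 0 ->
  n%:R * (1 - rho ^+ 2) * p4 - p4 + 2 / n%:R ^+ 2
    - 2 * alpha ^+ 2 / (n%:R ^+ 2 * (alpha ^+ 2 - 2 * l2 + p1)) <= 0 ->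
  p4 - rho ^+ 2 + 2 * L * gam * l2 - 2 * L * m * l1 + 1
    - ((L + m) * l1 + (L - gam) * l2 - alpha) ^+ 2
      / (alpha ^+ 2 - 2 * l1 - 2 * l2 + p1) <= 0 ->
  w = n%:R^-1 * (\sum_i a i) - alpha * (\sum_i b i) ->
  n%:R^-1 * (\sum_i (p4 * ((\sum_j a j * a j) - a i * a i + w * w)
                     + p1 * ((\sum_j b j * b j) - b i * b i + u i * u i)
                     + (w + n%:R^-1 * (w - a i) - alpha * (u i - b i))
                       * (w + n%:R^-1 * (w - a i) - alpha * (u i - b i))))
  - rho ^+ 2 * (p4 * (\sum_j a j * a j) + p1 * (\sum_j b j * b j) + w * w)
  + l1 * (- (2 * m * L) * (w * w) + 2 * (L + m) * (w * (n%:R^-1 * \sum_i u i))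
          - 2 * ((n%:R^-1 * \sum_i u i) * (n%:R^-1 * \sum_i u i)))
  + l2 * (n%:R^-1 * \sum_i (2 * gam * L * (w * w) + 2 * (L - gam) * (w * u i)
                          - 2 * (u i * u i)))
  <= 0.
Proof.
move=> n0 hrho hl1 hD c2 c3 c4 hw.
have nR : 0 < n%:R :> R by rewrite ltr0n.
have nR0 : n%:R != 0 :> R by rewrite gt_eqF.
set D := alpha ^+ 2 - 2 * l2 + p1.
set D' := alpha ^+ 2 - 2 * l1 - 2 * l2 + p1.
have D0 : D != 0 by rewrite lt_eqF.
have hD' : D' < 0 by rewrite /D'; lra.
have D'0 : D' != 0 by rewrite lt_eqF.
set SAA := \sum_j a j * a j. set SBB := \sum_j b j * b j.
set SUU := \sum_j u j * u j. set SAB := \sum_j a j * b j.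
set SAU := \sum_j a j * u j. set SBU := \sum_j b j * u j.
set SA := \sum_j a j. set SB := \sum_j b j. set SU := \sum_j u j.
pose k : R := 1 + n%:R^-1.
have E1 := @sum_quad R n a b u (- p4 + n%:R^-2) (- p1 + alpha ^+ 2) (p1 + alpha ^+ 2)
   (-2 * alpha / n%:R) (2 * alpha / n%:R) (-2 * alpha ^+ 2) (-2 * k * w / n%:R)
   (2 * alpha * k * w) (-2 * alpha * k * w) (p4 * SAA + p4 * (w * w) + p1 * SBB + k ^+ 2 * (w * w)).
rewrite -/SAA -/SBB -/SUU -/SAB -/SAU -/SBU -/SA -/SB -/SU in E1.
rewrite (eq_bigr (fun i => (- p4 + n%:R^-2) * (a i * a i) + (- p1 + alpha ^+ 2) * (b i * b i)
   + (p1 + alpha ^+ 2) * (u i * u i) + (-2 * alpha / n%:R) * (a i * b i)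
   + (2 * alpha / n%:R) * (a i * u i) + (-2 * alpha ^+ 2) * (b i * u i)
   + (-2 * k * w / n%:R) * a i + (2 * alpha * k * w) * b i + (-2 * alpha * k * w) * u i
   + (p4 * SAA + p4 * (w * w) + p1 * SBB + k ^+ 2 * (w * w)))); last first.
  move=> i _; rewrite /k; field; exact: nR0.
rewrite E1 {E1}.
have E2 := @sum_quad R n a b u 0 0 (-2) 0 0 0 0 0 (2 * (L - gam) * w) (2 * gam * L * (w * w)).
rewrite -/SAA -/SBB -/SUU -/SAB -/SAU -/SBU -/SA -/SB -/SU in E2.
rewrite (eq_bigr (fun i => 0 * (a i * a i) + 0 * (b i * b i)
   + (-2) * (u i * u i) + 0 * (a i * b i)
   + 0 * (a i * u i) + 0 * (b i * u i)
   + 0 * a i + 0 * b i + (2 * (L - gam) * w) * u i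
   + (2 * gam * L * (w * w)))); last first.
  by move=> i _; ring.
rewrite E2 {E2}.
pose kap : R := 1 - n%:R^-1 - rho ^+ 2.
pose eta : R := n%:R^-1 * (1 - alpha ^+ 2 / D).
have etage0 : 0 <= eta.
  rewrite /eta; apply: mulr_ge0; first by rewrite invr_ge0 ltW.
  rewrite subr_ge0; apply: (le_trans (y := 0)); last exact: ler01.
  by apply: mulr_ge0_le0; [exact: sqr_ge0 | rewrite invr_le0 ltW].
have F1 : p4 * kap + 2 * eta / n%:R ^+ 2 <= 0.
  have -> : p4 * kap + 2 * eta / n%:R ^+ 2 =
     (n%:R * (1 - rho ^+ 2) * p4 - p4 + 2 / n%:R ^+ 2
      - 2 * alpha ^+ 2 / (n%:R ^+ 2 * D)) / n%:R.
    by rewrite /kap /eta; field; rewrite nR0 D0.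
  by rewrite pmulr_lle0 ?invr_gt0.
have F2 : p1 * kap + 2 * eta * alpha ^+ 2 <= 0.
  have -> : p1 * kap + 2 * eta * alpha ^+ 2 =
     (n%:R * (1 - rho ^+ 2) * p1 - p1 + 2 * alpha ^+ 2
    - 2 * alpha ^+ 4 / D) / n%:R.
    by rewrite /kap /eta; field; rewrite nR0 D0.
  by rewrite pmulr_lle0 ?invr_gt0.
have Hr : (p4 * kap + eta / n%:R ^+ 2) * SAA + (p1 * kap + eta * alpha ^+ 2) * SBB
          - 2 * eta * alpha / n%:R * SAB <= 0.
  have E := @sum_quad R n a b u (p4 * kap + eta / n%:R ^+ 2) (p1 * kap + eta * alpha ^+ 2) 0
     (- (2 * eta * alpha / n%:R)) 0 0 0 0 0 0.
  rewrite -/SAA -/SBB -/SUU -/SAB -/SAU -/SBU -/SA -/SB -/SU in E.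
  have -> : (p4 * kap + eta / n%:R ^+ 2) * SAA + (p1 * kap + eta * alpha ^+ 2) * SBB
          - 2 * eta * alpha / n%:R * SAB = 
     (p4 * kap + eta / n%:R ^+ 2) * SAA + (p1 * kap + eta * alpha ^+ 2) * SBB + 0 * SUU +
    - (2 * eta * alpha / n%:R) * SAB + 0 * SAU + 0 * SBU + 0 * SA + 0 * SB + 0 * SU + 0 * n%:R.
    by ring.
  rewrite -E; apply: sumr_le0 => i _.
  have -> : (p4 * kap + eta / n%:R ^+ 2) * (a i * a i) + (p1 * kap + eta * alpha ^+ 2) * (b i * b i) +
    0 * (u i * u i) + - (2 * eta * alpha / n%:R) * (a i * b i) + 0 * (a i * u i) +
    0 * (b i * u i) + 0 * a i + 0 * b i + 0 * u i + 0 =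
    (p4 * kap + 2 * eta / n%:R ^+ 2) * (a i * a i) + (p1 * kap + 2 * eta * alpha ^+ 2) * (b i * b i)
    - eta * ((a i / n%:R + alpha * b i) * (a i / n%:R + alpha * b i)).
    by field.
  have h1 : (p4 * kap + 2 * eta / n%:R ^+ 2) * (a i * a i) <= 0.
    by apply: mulr_le0_ge0 => //; rewrite -expr2 sqr_ge0.
  have h2 : (p1 * kap + 2 * eta * alpha ^+ 2) * (b i * b i) <= 0.
    by apply: mulr_le0_ge0 => //; rewrite -expr2 sqr_ge0.
  have h3 : 0 <= eta * ((a i / n%:R + alpha * b i) * (a i / n%:R + alpha * b i)).
    by rewrite mulr_ge0 // -expr2 sqr_ge0.
  lra.
pose be : R := alpha / (n%:R * D).
pose de : R := alpha ^+ 2 / D.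
have Hz := @sum_cs R n (fun i => u i + be * a i - de * b i) n0.
have Ez2 := @sum_quad R n a b u (be ^+ 2) (de ^+ 2) 1 (-2 * be * de) (2 * be) (-2 * de) 0 0 0 0.
have Ez1 := @sum_quad R n a b u 0 0 0 0 0 0 be (- de) 1 0.
rewrite -/SAA -/SBB -/SUU -/SAB -/SAU -/SBU -/SA -/SB -/SU in Ez1 Ez2.
rewrite [X in X ^+ 2 <= _](eq_bigr (fun i => 0 * (a i * a i) + 0 * (b i * b i) + 0 * (u i * u i) + 0 * (a i * b i)
  + 0 * (a i * u i) + 0 * (b i * u i) + be * a i + (- de) * b i + 1 * u i + 0)) in Hz;
  last by move=> i _; ring.
rewrite [X in _ <= _ * X](eq_bigr (fun i => be ^+ 2 * (a i * a i) + de ^+ 2 * (b i * b i) + 1 * (u i * u i)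
  + (-2 * be * de) * (a i * b i)
  + (2 * be) * (a i * u i) + (-2 * de) * (b i * u i) + 0 * a i + 0 * b i + 0 * u i + 0)) in Hz;
  last by move=> i _; ring.
rewrite Ez1 Ez2 in Hz.
pose K : R := (L + m) * l1 + (L - gam) * l2 - alpha.
pose P : R := p4 - rho ^+ 2 + 2 * L * gam * l2 - 2 * L * m * l1 + 1.
pose C : R := P - 1 / n%:R ^+ 2 + alpha ^+ 2 / (n%:R ^+ 2 * D).
pose B : R := D' / n%:R ^+ 2 * (SU * SU) + 2 * K / n%:R * w * SU + C * (w * w).
have HB : B <= 0.
  have hPD : 0 <= P * D' - K ^+ 2.
    have h : P - K ^+ 2 / D' <= 0 by exact: c4.
    have -> : P * D' - K ^+ 2 = (P - K ^+ 2 / D') * D' by field.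
    by apply: mulr_le0 => //; exact: ltW.
  have hCP : C <= P.
    rewrite /C.
    have : alpha ^+ 2 / (n%:R ^+ 2 * D) <= 0.
      apply: mulr_ge0_le0; first exact: sqr_ge0.
      rewrite invr_le0; apply: mulr_ge0_le0; first exact: sqr_ge0.
      exact: ltW.
    have : 0 <= 1 / n%:R ^+ 2 :> R by apply: divr_ge0 => //; exact: sqr_ge0.
    lra.
  have hCD : 0 <= C * D' - K ^+ 2.
    have : P * D' <= C * D' by rewrite ler_wnM2r // ltW.
    lra.
  have E : n%:R ^+ 2 * D' * B = (D' * SU + K * n%:R * w) ^+ 2 + (C * D' - K ^+ 2) * (n%:R ^+ 2 * (w * w)).
    by rewrite /B; field.
  have h0 : 0 <= n%:R ^+ 2 * D' * B.
    rewrite E; apply: addr_ge0; first exact: sqr_ge0.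
    by apply: mulr_ge0 => //; rewrite mulr_ge0 ?sqr_ge0 // -expr2 sqr_ge0.
  have hn2 : n%:R ^+ 2 * D' < 0 by rewrite pmulr_rlt0 // exprn_gt0.
  by move: h0; rewrite nmulr_rge0.
pose Zsq : R := be ^+ 2 * SAA + de ^+ 2 * SBB + SUU - 2 * be * de * SAB + 2 * be * SAU - 2 * de * SBU.
pose Z1 : R := be * SA - de * SB + SU.
have Hz2 : Z1 ^+ 2 <= n%:R * Zsq.
  have e1 : Z1 = 0 * SAA + 0 * SBB + 0 * SUU + 0 * SAB + 0 * SAU + 0 * SBU + be * SA +
     - de * SB + 1 * SU + 0 * n%:R by rewrite /Z1; ring.
  have e2 : Zsq = be ^+ 2 * SAA + de ^+ 2 * SBB + 1 * SUU + -2 * be * de * SAB +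
       2 * be * SAU + -2 * de * SBU + 0 * SA + 0 * SB + 0 * SU + 0 * n%:R by rewrite /Zsq; ring.
  by rewrite e1 e2.
have Hz3 : D / n%:R * (Zsq - Z1 ^+ 2 / n%:R) <= 0.
  apply: mulr_le0_ge0.
    by apply: mulr_le0_ge0; [exact: ltW | rewrite invr_ge0 ltW].
  by rewrite subr_ge0 ler_pdivrMr // mulrC.
match goal with |- is_true (@Order.le _ _ ?G _) =>
  have Hid : G = ((p4 * kap + eta / n%:R ^+ 2) * SAA + (p1 * kap + eta * alpha ^+ 2) * SBB
          - 2 * eta * alpha / n%:R * SAB) + D / n%:R * (Zsq - Z1 ^+ 2 / n%:R) + B
end.
  rewrite /B /C /P /K /Zsq /Z1 /eta /be /de /kap /D' /k hw /D -/SA -/SB.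
  field.
  by rewrite nR0 D0.
rewrite Hid.
lra.
Qed.

Lemma sum_if (R : realType) (n : nat) (i : 'I_n) (P Q : 'I_n -> R) :
  \sum_j (if j == i then P j else Q j) = \sum_j Q j - Q i + P i.
Proof.
rewrite (bigD1 i) //= eqxx (bigD1 i (P := predT)) //=.
rewrite (eq_bigr Q); last by move=> j /negbTE ->.
by rewrite [Q i + _]addrC addrK addrC.
Qed.

Lemma raw_le (R : realType) (n : nat) (X Y G S : 'I_n -> R) (Xs V : R)
  (alpha rho p1 p4 l1 l2 m L gam : R) :
  (0 < n)%N ->
  1 - n%:R^-1 <= rho ^+ 2 ->
  0 <= l1 ->
  alpha ^+ 2 - 2 * l2 + p1 < 0 ->
  n%:R * (1 - rho ^+ 2) * p1 - p1 + 2 * alpha ^+ 2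
    - 2 * alpha ^+ 4 / (alpha ^+ 2 - 2 * l2 + p1) <= 0 ->
  n%:R * (1 - rho ^+ 2) * p4 - p4 + 2 / n%:R ^+ 2
    - 2 * alpha ^+ 2 / (n%:R ^+ 2 * (alpha ^+ 2 - 2 * l2 + p1)) <= 0 ->
  p4 - rho ^+ 2 + 2 * L * gam * l2 - 2 * L * m * l1 + 1
    - ((L + m) * l1 + (L - gam) * l2 - alpha) ^+ 2
      / (alpha ^+ 2 - 2 * l1 - 2 * l2 + p1) <= 0 ->
  \sum_j S j = 0 ->
  V = n%:R^-1 * (\sum_j X j) - alpha * (\sum_j Y j) ->
  n%:R^-1 * (\sum_i (p4 * (\sum_j ((if j == i then V else X j) - Xs) * ((if j == i then V else X j) - Xs))
       + p1 * (\sum_j ((if j == i then G i else Y j) - S j) * ((if j == i then G i else Y j) - S j))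
       + (n%:R^-1 * (\sum_j (if j == i then V else X j)) - alpha * (\sum_j (if j == i then G i else Y j)) - Xs)
         * (n%:R^-1 * (\sum_j (if j == i then V else X j)) - alpha * (\sum_j (if j == i then G i else Y j)) - Xs)))
  - rho ^+ 2 * (p4 * (\sum_j (X j - Xs) * (X j - Xs)) + p1 * (\sum_j (Y j - S j) * (Y j - S j))
       + (V - Xs) * (V - Xs))
  + l1 * (- (2 * m * L) * ((V - Xs) * (V - Xs)) + 2 * (L + m) * ((V - Xs) * (n%:R^-1 * \sum_i G i))
          - 2 * ((n%:R^-1 * \sum_i G i) * (n%:R^-1 * \sum_i G i)))
  + l2 * (n%:R^-1 * \sum_i (2 * gam * L * ((V - Xs) * (V - Xs)) + 2 * (L - gam) * ((V - Xs) * (G i - S i))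
          - 2 * ((G i - S i) * (G i - S i))))
  <= 0.
Proof.
move=> n0 hrho hl1 hD c2 c3 c4 hS hV.
have nR0 : n%:R != 0 :> R by rewrite pnatr_eq0 -lt0n.
pose a := fun j => X j - Xs. pose b := fun j => Y j - S j. pose u := fun j => G j - S j.
pose w := V - Xs.
have hw : w = n%:R^-1 * (\sum_i a i) - alpha * (\sum_i b i).
  rewrite /w /a /b !sumrB hS subr0 sumr_const card_ord hV.
  by rewrite -mulr_natr; field.
have eG : \sum_i G i = \sum_i u i by rewrite /u sumrB hS subr0.
rewrite eG.
rewrite (eq_bigr (fun i => p4 * ((\sum_j a j * a j) - a i * a i + w * w)
                     + p1 * ((\sum_j b j * b j) - b i * b i + u i * u i)
                     + (w + n%:R^-1 * (w - a i) - alpha * (u i - b i))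
                       * (w + n%:R^-1 * (w - a i) - alpha * (u i - b i)))); last first.
  move=> i _.
  have e1 : \sum_j ((if j == i then V else X j) - Xs) * ((if j == i then V else X j) - Xs)
            = (\sum_j a j * a j) - a i * a i + w * w.
    rewrite (eq_bigr (fun j => if j == i then w * w else a j * a j)); last first.
      by move=> j _; case: (j == i).
    by rewrite sum_if.
  have e2 : \sum_j ((if j == i then G i else Y j) - S j) * ((if j == i then G i else Y j) - S j)
            = (\sum_j b j * b j) - b i * b i + u i * u i.
    rewrite (eq_bigr (fun j => if j == i then u j * u j else b j * b j)); last first.
      by move=> j _; case: eqP => // ->.
    by rewrite sum_if.
  have e3 : \sum_j (if j == i then V else X j) = \sum_j X j - X i + V.
    by rewrite (@sum_if _ _ i (fun _ => V) X).
  have e4 : \sum_j (if j == i then G i else Y j) = \sum_j Y j - Y i + G i.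
    by rewrite (@sum_if _ _ i (fun _ => G i) Y).
  rewrite e1 e2 e3 e4.
  have e5 : n%:R^-1 * (\sum_j X j - X i + V) - alpha * (\sum_j Y j - Y i + G i) - Xs
          = w + n%:R^-1 * (w - a i) - alpha * (u i - b i).
    rewrite /w /a /u /b hV; ring.
  by rewrite e5.
exact: (@clean _ _ a b u w alpha rho p1 p4 l1 l2 m L gam n0 hrho hl1 hD c2 c3 c4 hw).
Qed.
Section IP.
Context {R : realType} {p : nat}.
Implicit Types (u v w : 'rV[R]_p).

Lemma dotvC u v : dotv u v = dotv v u.
Proof. by rewrite /dotv; apply: eq_bigr => j _; rewrite mulrC. Qed.
Lemma dotvDl u v w : dotv (u + v) w = dotv u w + dotv v w.
Proof. by rewrite /dotv -big_split; apply: eq_bigr => j _; rewrite mxE mulrDl. Qed.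
Lemma dotvDr u v w : dotv w (u + v) = dotv w u + dotv w v.
Proof. by rewrite dotvC dotvDl !(dotvC w). Qed.
Lemma dotvZl (a : R) u v : dotv (a *: u) v = a * dotv u v.
Proof. by rewrite /dotv mulr_sumr; apply: eq_bigr => j _; rewrite mxE mulrA. Qed.
Lemma dotvZr (a : R) u v : dotv u (a *: v) = a * dotv u v.
Proof. by rewrite dotvC dotvZl dotvC. Qed.
Lemma dotvNl u v : dotv (- u) v = - dotv u v.
Proof. by rewrite -scaleN1r dotvZl mulN1r. Qed.
Lemma dotvNr u v : dotv u (- v) = - dotv u v.
Proof. by rewrite -scaleN1r dotvZr mulN1r. Qed.
Lemma dotvBl u v w : dotv (u - v) w = dotv u w - dotv v w.
Proof. by rewrite dotvDl dotvNl. Qed.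
Lemma dotvBr u v w : dotv w (u - v) = dotv w u - dotv w v.
Proof. by rewrite dotvDr dotvNr. Qed.
Lemma sqnorm_ge0 u : 0 <= sqnorm u.
Proof. by apply: sumr_ge0 => j _; rewrite -expr2 sqr_ge0. Qed.
Lemma sqnorm_eq0_dot u v : sqnorm u = 0 -> dotv u v = 0.
Proof.
move=> /eqP; rewrite /sqnorm /dotv psumr_eq0; last by move=> j _; rewrite -expr2 sqr_ge0.
move=> /allP h; apply: big1 => j _.
have : (u 0 j * u 0 j == 0) by apply: (h j); rewrite mem_index_enum.
by rewrite mulf_eq0 orbb => /eqP ->; rewrite mul0r.
Qed.
Lemma enorm_ge0 u : 0 <= enorm u.
Proof. exact: sqrtr_ge0. Qed.
Lemma enorm_sq u : enorm u ^+ 2 = sqnorm u.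
Proof. by rewrite /enorm sqr_sqrtr // sqnorm_ge0. Qed.
Lemma sqnormZ (a : R) u : sqnorm (a *: u) = a ^+ 2 * sqnorm u.
Proof. by rewrite /sqnorm dotvZl dotvZr mulrA expr2. Qed.
Lemma enormZ (a : R) u : enorm (a *: u) = `|a| * enorm u.
Proof. by rewrite /enorm sqnormZ sqrtrM ?sqr_ge0 // sqrtr_sqr. Qed.
Lemma enorm0_sq u : enorm u = 0 -> sqnorm u = 0.
Proof. by move=> h; rewrite -enorm_sq h expr2 mul0r. Qed.

Lemma CS u v : dotv u v <= enorm u * enorm v.
Proof.
set A := enorm u; set B := enorm v.
have hA : 0 <= A := enorm_ge0 u. have hB : 0 <= B := enorm_ge0 v.
have H := sqnorm_ge0 (B *: u - A *: v).
rewrite /sqnorm !dotvBl !dotvBr !dotvZl !dotvZr -!/(sqnorm _) (dotvC v u) in H.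
rewrite -(enorm_sq u) -(enorm_sq v) -/A -/B in H.
have [AB0|ABpos] := eqVneq (A * B) 0.
  move/eqP: AB0; rewrite mulf_eq0 => /orP [/eqP|/eqP] h.
    by rewrite (sqnorm_eq0_dot u v (enorm0_sq u h)) mulr_ge0.
  by rewrite dotvC (sqnorm_eq0_dot v u (enorm0_sq v h)) mulr_ge0.
have ABgt : 0 < A * B by rewrite lt_def ABpos mulr_ge0.
have : 0 <= (A * B) * (A * B - dotv u v) by nra.
by rewrite pmulr_rge0 // subr_ge0.
Qed.

Lemma CSN u v : - (enorm u * enorm v) <= dotv u v.
Proof.
have e : enorm (- u) = enorm u by rewrite /enorm /sqnorm dotvNl dotvNr opprK.
by rewrite lerNl -dotvNl -e; exact: CS.
Qed.
End IP.
Lemma line_derive (R : realType) (p : nat) (f : 'rV[R]_p -> R) (x d : 'rV[R]_p) (t : R) :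
  differentiable f (x + t *: d) ->
  is_derive t 1 (fun s : R => f (x + s *: d)) ('d f (x + t *: d) d).
Proof.
move=> df.
have E : (fun h : R => h^-1 *: (((fun s : R => f (x + s *: d)) \o shift t) (h *: 1) - f (x + t *: d)))
   = (fun h : R => h^-1 *: ((f \o shift (x + t *: d)) (h *: d) - f (x + t *: d))).
  apply/funext => h /=; congr (_ *: (f _ - _)).
  by rewrite /= [h *: 1]mulr1 scalerDl addrCA.
have dv : derivable f (x + t *: d) d by apply: diff_derivable.
split.
  by rewrite /derivable E.
by rewrite /derive E -deriveE.
Qed.

Lemma grad_line (R : realType) (p : nat) (f : 'rV[R]_p -> R) g (x d : 'rV[R]_p) (t : R) :
  is_gradient f g ->
  is_derive t 1 (fun s : R => f (x + s *: d)) (dotv (g (x + t *: d)) d).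
Proof.
move=> hg; have [df dfE] := hg (x + t *: d).
by rewrite -dfE; apply: line_derive.
Qed.

Lemma upper_bound (R : realType) (p : nat) (f : 'rV[R]_p -> R) g (L : R) :
  is_gradient f g -> L_smooth L g ->
  forall x d, f (x + d) <= f x + dotv (g x) d + L / 2 * sqnorm d.
Proof.
move=> hg hL x d.
pose c1 := dotv (g x) d. pose c2 := L / 2 * sqnorm d.
pose psi := fun s : R => f (x + s *: d) - (s * c1 + s * s * c2).
have dpsi : forall t : R, is_derive t 1 psi (dotv (g (x + t *: d)) d - (c1 * 1 + (t * 1 + 1 * t) * c2)).
  move=> t.
  have h1 := grad_line _ _ _ _ x d t hg.
  have h2 : is_derive t 1 (fun s : R => s * c1 + s * s * c2) (c1 * 1 + (t * 1 + 1 * t) * c2).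
    have hid : is_derive t 1 (id : R -> R) 1 := is_derive_id t 1.
    have hc1 : is_derive t 1 (cst c1 : R -> R) 0 := is_derive_cst c1 t 1.
    have hc2 : is_derive t 1 (cst c2 : R -> R) 0 := is_derive_cst c2 t 1.
    have hm1 := is_deriveM hid hc1.
    have hm2 := is_deriveM hid hid.
    have hm3 := is_deriveM hm2 hc2.
    have hs := is_deriveD hm1 hm3.
    have hs' : is_derive t 1 (fun s : R => s * c1 + s * s * c2)
      (t *: 0 + (cst c1 t)%:A + ((id * id) t *: 0 + cst c2 t *: (t%:A + t%:A))) := hs.
    apply: (is_derive_eq hs').
    change (t * 0 + c1 * 1 + (t * t * 0 + c2 * (t * 1 + t * 1)) = c1 * 1 + (t * 1 + 1 * t) * c2).
    ring.
  have := @is_deriveB R R R (fun s : R => f (x + s *: d)) (fun s : R => s * c1 + s * s * c2) t 1 _ _ h1 h2.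
  by [].
have key : psi 1 <= psi 0.
  have dv : forall t : R, t \in `]0, 1[%R -> derivable psi t 1 by move=> t _; case: (dpsi t).
  have dle : forall t : R, t \in `]0, 1[%R -> derive1 psi t <= 0.
    move=> t; rewrite in_itv /= => /andP [t0 _].
    rewrite derive1E; have [_ ->] := dpsi t.
    rewrite /c1 /c2.
    have h1 := CS (g (x + t *: d) - g x) d.
    have h2 := hL (x + t *: d) x.
    have e1 : x + t *: d - x = t *: d by rewrite addrC addKr.
    rewrite e1 enormZ gtr0_norm // in h2.
    have h3 : enorm (g (x + t *: d) - g x) * enorm d <= L * (t * enorm d) * enorm d.
      by apply: ler_wpM2r => //; exact: enorm_ge0.
    have e2 : enorm d * enorm d = sqnorm d by rewrite -enorm_sq expr2.
    rewrite dotvBl in h1.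
    have e3 : L * (t * enorm d) * enorm d = L * t * sqnorm d by rewrite -e2; ring.
    rewrite e3 in h3.
    have e4 : c1 * 1 + (t * 1 + 1 * t) * (L / 2 * sqnorm d) = c1 + L * t * sqnorm d by field.
    rewrite /c1 in e4; rewrite e4.
    lra.
  have cont := derivable_within_continuous (f := psi) (i := `[0, 1]%R) (fun t _ => @ex_derive _ _ _ _ _ _ _ (dpsi t)).
  apply: (ler0_derive1_le_cc dv dle cont) => //.
    by rewrite in_itv /= lexx ler01.
  by rewrite in_itv /= lexx ler01.
move: key; rewrite /psi scale1r scale0r addr0 /c1 /c2.
lra.
Qed.

Lemma lower_bound (R : realType) (p : nat) (f : 'rV[R]_p -> R) g (L mu : R) :
  is_gradient f g -> L_smooth L g -> strongly_convex mu f ->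
  forall x d, f x + dotv (g x) d + mu / 2 * sqnorm d <= f (x + d).
Proof.
move=> hg hL hc x d.
have hd0 := sqnorm_ge0 d.
have est : forall t : R, 0 < t -> t <= 1 ->
    dotv (g x) d - `|L| * t * sqnorm d <= f (x + d) - f x - mu / 2 * (1 - t) * sqnorm d.
  move=> t t0 t1.
  pose phi := fun s : R => f (x + s *: d).
  have dphi : forall s : R, is_derive s 1 phi (dotv (g (x + s *: d)) d).
    by move=> s; exact: grad_line.
  have cont := derivable_within_continuous (f := phi) (i := `[0, t]%R)
      (fun s _ => @ex_derive _ _ _ _ _ _ _ (dphi s)).
  have [c cin hc2] := MVT (df := fun s => dotv (g (x + s *: d)) d) t0 (fun s _ => dphi s) cont.
  move: cin; rewrite in_itv /= => /andP [c0 ct].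
  have lowd : dotv (g x) d - `|L| * t * sqnorm d <= dotv (g (x + c *: d)) d.
    have h1 := CSN (g (x + c *: d) - g x) d.
    have h2 := hL (x + c *: d) x.
    have e1 : x + c *: d - x = c *: d by rewrite addrC addKr.
    rewrite e1 enormZ gtr0_norm // in h2.
    have h3 : enorm (g (x + c *: d) - g x) * enorm d <= L * (c * enorm d) * enorm d.
      by apply: ler_wpM2r => //; exact: enorm_ge0.
    have e2 : enorm d * enorm d = sqnorm d by rewrite -enorm_sq expr2.
    have e3 : L * (c * enorm d) * enorm d = L * c * sqnorm d by rewrite -e2; ring.
    rewrite e3 in h3.
    rewrite dotvBl in h1.
    have h4 : L * c * sqnorm d <= `|L| * t * sqnorm d.
      apply: ler_wpM2r => //.
      apply: (le_trans (y := `|L| * c)); first by apply: ler_wpM2r; [exact: ltW | exact: ler_norm].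
      by apply: ler_wpM2l => //; exact: ltW.
    lra.
  have hconv := hc x (x + d) t (ltW t0) t1.
  have e4 : (1 - t) *: x + t *: (x + d) = x + t *: d.
    by rewrite scalerDr scalerBl scale1r addrA subrK.
  have e5 : sqnorm (x - (x + d)) = sqnorm d.
    by rewrite opprD addrA subrr add0r /sqnorm dotvNl dotvNr opprK.
  rewrite e4 e5 in hconv.
  rewrite /phi scale0r addr0 subr0 in hc2.
  have h6 : t * (dotv (g x) d - `|L| * t * sqnorm d) <= f (x + t *: d) - f x.
    by rewrite hc2 mulrC; apply: ler_wpM2r => //; exact: ltW.
  have h7 : t * (dotv (g x) d - `|L| * t * sqnorm d) <=
            t * (f (x + d) - f x - mu / 2 * (1 - t) * sqnorm d).
    apply: (le_trans h6); rewrite -subr_ge0; move: hconv; rewrite -subr_ge0 => h8.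
    have -> : t * (f (x + d) - f x - mu / 2 * (1 - t) * sqnorm d) - (f (x + t *: d) - f x)
        = (1 - t) * f x + t * f (x + d) - mu / 2 * t * (1 - t) * sqnorm d - f (x + t *: d) by ring.
    exact: h8.
  by rewrite ler_pM2l in h7.
apply/ler_addgt0Pr => e e0.
pose K := (`|L| + `|mu| / 2) * sqnorm d.
have K0 : 0 <= K by rewrite mulr_ge0 // addr_ge0 // divr_ge0.
pose t := Num.min 1 (e / (K + 1)).
have t0 : 0 < t by rewrite lt_min ltr01 divr_gt0 // ltr_wpDl.
have t1 : t <= 1 by rewrite ge_min lexx.
have tK : t * K <= e.
  have : t <= e / (K + 1) by rewrite ge_min lexx orbT.
  move=> h; apply: (le_trans (y := e / (K + 1) * K)); first by apply: ler_wpM2r.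
  apply: (le_trans (y := e / (K + 1) * (K + 1))).
    apply: ler_wpM2l; first by apply: divr_ge0; [exact: ltW | apply: addr_ge0].
    by rewrite lerDl.
  by rewrite divfK // gt_eqF // ltr_wpDl.
have hE := est t t0 t1.
have hmu : mu / 2 * t * sqnorm d <= `|mu| / 2 * t * sqnorm d.
  apply: ler_wpM2r => //; apply: ler_wpM2r; first exact: ltW.
  by apply: ler_wpM2r => //; exact: ler_norm.
have : t * K = `|L| * t * sqnorm d + `|mu| / 2 * t * sqnorm d by rewrite /K; ring.
nra.
Qed.

Lemma sc_ineq (R : realType) (p : nat) (f : 'rV[R]_p -> R) g (L mu : R) :
  is_gradient f g -> L_smooth L g -> strongly_convex mu f ->
  forall x y, mu * L * sqnorm (y - x) + sqnorm (g y - g x)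
              <= (L + mu) * dotv (y - x) (g y - g x).
Proof.
move=> hg hL hc x y.
have lb := lower_bound _ _ _ _ _ _ hg hL hc.
have ub := upper_bound _ _ _ _ _ hg hL.
pose D := y - x.
pose dh := g y - g x - mu *: D.
have egy : g y = g x + dh + mu *: D by rewrite /dh -addrA subrK addrC subrK.
have ey : y = x + D by rewrite /D addrC subrK.
clearbody D dh.
have key : forall s : R, - dotv dh D + 2 * s * sqnorm dh <= (L - mu) * s ^+ 2 * sqnorm dh.
  move=> s.
  have E1 := lb x (D - s *: dh).
  have U1 := ub y (- (s *: dh)).
  have E2 := lb y (- D + s *: dh).
  have U2 := ub x (s *: dh).
  have q1 : x + (D - s *: dh) = y + - (s *: dh) by rewrite ey addrA.
  have q2 : y + (- D + s *: dh) = x + s *: dh by rewrite ey addrA addrK.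
  rewrite q1 in E1. rewrite q2 in E2.
  rewrite egy /sqnorm in U1 E2.
  rewrite /sqnorm in E1 U2.
  rewrite !(dotvDl, dotvDr, dotvZl, dotvZr, dotvNl, dotvNr, dotvBl, dotvBr) in E1 U1 E2 U2 *.
  rewrite ?(dotvC D (g x)) ?(dotvC dh (g x)) ?(dotvC dh D) in E1 U1 E2 U2 *.
  rewrite /sqnorm; lra.
have eD : y - x = D by rewrite ey addrAC subrr add0r.
have eG : g y - g x = dh + mu *: D by rewrite egy addrAC [g x + dh - g x]addrAC subrr add0r.
rewrite eD eG /sqnorm !(dotvDl, dotvDr, dotvZl, dotvZr) (dotvC dh D).
set P := dotv D dh. set Q := dotv dh dh. set DD := dotv D D.
have Q0 : 0 <= Q by exact: sqnorm_ge0.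
suff : Q <= (L - mu) * P by nra.
have [Lpos|Lneg] := ltrP 0 (L - mu).
  have k := key (L - mu)^-1.
  rewrite /sqnorm -/P -/Q in k.
  have e : (L - mu) * (L - mu)^-1 ^+ 2 * Q = Q / (L - mu).
    by field; rewrite gt_eqF.
  rewrite e in k.
  rewrite (dotvC dh D) -/P in k.
  have e2 : 2 / (L - mu) * Q = 2 * (Q / (L - mu)) by rewrite mulrAC mulrA.
  have : Q / (L - mu) <= P by lra.
  by rewrite ler_pdivrMr // mulrC.
have Qz : Q = 0.
  have [Qp|Qle] := ltrP 0 Q; last by apply/eqP; rewrite eq_le Q0 Qle.
  suff : (0 : R) < 0 by rewrite ltxx.
  have k := key ((`|P| + 1) / Q).
  rewrite /sqnorm (dotvC dh D) -/P -/Q in k.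
  have e1 : 2 * ((`|P| + 1) / Q) * Q = 2 * (`|P| + 1) by field; rewrite gt_eqF.
  rewrite e1 in k.
  have h2 : (L - mu) * ((`|P| + 1) / Q) ^+ 2 * Q <= 0.
    apply: mulr_le0_ge0; last exact: Q0.
    by apply: mulr_le0_ge0 => //; exact: sqr_ge0.
  have h3 : P <= `|P| := ler_norm P.
  have h4 := normr_ge0 P.
  lra.
have Pz : P = 0 by rewrite /P dotvC; apply: sqnorm_eq0_dot.
by rewrite Qz Pz mulr0.
Qed.
Lemma P1 (R : realType) (n p : nat) (F G : 'I_n -> 'I_n -> 'I_p -> R) (H : 'I_n -> 'I_p -> R) (ni p4 p1 : R) :
  \sum_c (ni * \sum_i (p4 * (\sum_j F i j c) + p1 * (\sum_j G i j c) + H i c))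
  = ni * \sum_i (p4 * (\sum_j \sum_c F i j c) + p1 * (\sum_j \sum_c G i j c) + \sum_c H i c).
Proof.
rewrite -mulr_sumr exchange_big /=; congr (_ * _); apply: eq_bigr => i _.
rewrite !big_split /= -!mulr_sumr.
by rewrite [in LHS](exchange_big _ _ _ (fun _ => true) (fun _ => true) (fun c j => F i j c))
  [in LHS](exchange_big _ _ _ (fun _ => true) (fun _ => true) (fun c j => G i j c)).
Qed.

Lemma P2 (R : realType) (n p : nat) (F G : 'I_n -> 'I_p -> R) (H : 'I_p -> R) (k p4 p1 : R) :
  \sum_c (k * (p4 * (\sum_j F j c) + p1 * (\sum_j G j c) + H c))
  = k * (p4 * (\sum_j \sum_c F j c) + p1 * (\sum_j \sum_c G j c) + \sum_c H c).
Proof.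
rewrite -mulr_sumr; congr (_ * _).
rewrite !big_split /= -!mulr_sumr.
by rewrite [in LHS](exchange_big _ _ _ (fun _ => true) (fun _ => true) (fun c j => F j c))
  [in LHS](exchange_big _ _ _ (fun _ => true) (fun _ => true) (fun c j => G j c)).
Qed.

Lemma P3 (R : realType) (p : nat) (F G H : 'I_p -> R) (l k1 k2 : R) :
  \sum_c (l * (k1 * F c + k2 * G c - 2 * H c))
  = l * (k1 * (\sum_c F c) + k2 * (\sum_c G c) - 2 * (\sum_c H c)).
Proof.
by rewrite -mulr_sumr !big_split /= sumrN -!mulr_sumr.
Qed.

Lemma P4 (R : realType) (n p : nat) (F : 'I_p -> R) (G H : 'I_n -> 'I_p -> R) (l ni k1 k2 : R) :
  \sum_c (l * (ni * \sum_i (k1 * F c + k2 * G i c - 2 * H i c)))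
  = l * (ni * \sum_i (k1 * (\sum_c F c) + k2 * (\sum_c G i c) - 2 * (\sum_c H i c))).
Proof.
rewrite -mulr_sumr -mulr_sumr exchange_big /=; congr (_ * (_ * _)); apply: eq_bigr => i _.
by rewrite !big_split /= sumrN -!mulr_sumr.
Qed.

Lemma exch (R : realType) (n p : nat) (A B : 'I_n -> 'I_n -> 'I_p -> R) (W : 'I_n -> 'I_p -> R)
  (A0 B0 U : 'I_n -> 'I_p -> R) (W0 Gb : 'I_p -> R) (ni rho p1 p4 l1 l2 m L gam : R) :
  ni * (\sum_i (p4 * (\sum_j \sum_c A i j c * A i j c) + p1 * (\sum_j \sum_c B i j c * B i j c)
        + \sum_c W i c * W i c))
  - rho ^+ 2 * (p4 * (\sum_j \sum_c A0 j c * A0 j c) + p1 * (\sum_j \sum_c B0 j c * B0 j c)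
        + \sum_c W0 c * W0 c)
  + l1 * (- (2 * m * L) * (\sum_c W0 c * W0 c) + 2 * (L + m) * (\sum_c W0 c * Gb c)
          - 2 * (\sum_c Gb c * Gb c))
  + l2 * (ni * \sum_i (2 * gam * L * (\sum_c W0 c * W0 c) + 2 * (L - gam) * (\sum_c W0 c * U i c)
          - 2 * (\sum_c U i c * U i c)))
  = \sum_c (
  ni * (\sum_i (p4 * (\sum_j A i j c * A i j c) + p1 * (\sum_j B i j c * B i j c)
        + W i c * W i c))
  - rho ^+ 2 * (p4 * (\sum_j A0 j c * A0 j c) + p1 * (\sum_j B0 j c * B0 j c)
        + W0 c * W0 c)
  + l1 * (- (2 * m * L) * (W0 c * W0 c) + 2 * (L + m) * (W0 c * Gb c)
          - 2 * (Gb c * Gb c))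
  + l2 * (ni * \sum_i (2 * gam * L * (W0 c * W0 c) + 2 * (L - gam) * (W0 c * U i c)
          - 2 * (U i c * U i c)))).
Proof.
rewrite [in RHS]big_split /= [in RHS]big_split /= [in RHS]big_split /= [in RHS]sumrN.
have eP1 := @P1 _ _ _ (fun i j c => A i j c * A i j c) (fun i j c => B i j c * B i j c) (fun i c => W i c * W i c).
have eP2 := @P2 _ _ _ (fun j c => A0 j c * A0 j c) (fun j c => B0 j c * B0 j c) (fun c => W0 c * W0 c).
have eP3 := @P3 _ _ (fun c => W0 c * W0 c) (fun c => W0 c * Gb c) (fun c => Gb c * Gb c).
have eP4 := @P4 _ _ _ (fun c => W0 c * W0 c) (fun i c => W0 c * U i c) (fun i c => U i c * U i c).
rewrite /= in eP1 eP2 eP3 eP4.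
by rewrite eP1 eP2 eP3 eP4.
Qed.

Lemma class_ineq (R : realType) (p : nat) (m L : R) (c : fclass) (f : 'rV[R]_p -> R) g :
  in_class m L c f g -> forall x y,
  0 <= 2 * class_gamma m L c * L * sqnorm (y - x)
       + 2 * (L - class_gamma m L c) * dotv (y - x) (g y - g x) - 2 * sqnorm (g y - g x).
Proof.
case: c => [] [[hg _] [hL hc]] /= x y.
- have := sc_ineq _ _ _ _ _ _ hg hL hc x y. lra.
- have := sc_ineq _ _ _ _ _ _ hg hL hc x y. lra.
- have h := hL y x.
  have h0 := enorm_ge0 (g y - g x).
  have h1 : enorm (g y - g x) ^+ 2 <= (L * enorm (y - x)) ^+ 2.
    rewrite -subr_ge0. have -> : (L * enorm (y - x)) ^+ 2 - enorm (g y - g x) ^+ 2 =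
      (L * enorm (y - x) - enorm (g y - g x)) * (L * enorm (y - x) + enorm (g y - g x)) by ring.
    apply: mulr_ge0; lra.
  rewrite exprMn !enorm_sq in h1.
  lra.
Qed.

Lemma one_step (R : realType) (n p : nat) (c : fclass)
  (f : 'I_n -> 'rV[R]_p -> R) (gf : 'I_n -> 'rV[R]_p -> 'rV[R]_p)
  (m L : R) (xstar : 'rV[R]_p)
  (alpha rho p1 p4 lambda1 lambda2 : R) :
  (0 < n)%N ->
  (forall i, in_class m L c (f i) (gf i)) ->
  in_S m L (fun x => n%:R^-1 *: \sum_(i < n) gf i x) xstar ->
  1 - n%:R^-1 <= rho ^+ 2 ->
  0 <= lambda1 -> 0 <= lambda2 ->
  let gamma := class_gamma m L c in
  alpha ^+ 2 - 2 * lambda2 + p1 < 0 ->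
  n%:R * (1 - rho ^+ 2) * p1 - p1 + 2 * alpha ^+ 2
    - 2 * alpha ^+ 4 / (alpha ^+ 2 - 2 * lambda2 + p1) <= 0 ->
  n%:R * (1 - rho ^+ 2) * p4 - p4 + 2 / n%:R ^+ 2
    - 2 * alpha ^+ 2 / (n%:R ^+ 2 * (alpha ^+ 2 - 2 * lambda2 + p1)) <= 0 ->
  p4 - rho ^+ 2 + 2 * L * gamma * lambda2 - 2 * L * m * lambda1 + 1
    - ((L + m) * lambda1 + (L - gamma) * lambda2 - alpha) ^+ 2
      / (alpha ^+ 2 - 2 * lambda1 - 2 * lambda2 + p1) <= 0 ->
  forall (x y : 'I_n -> 'rV[R]_p),
  n%:R^-1 * \sum_i finito_lyap alpha p1 p4 gf xstar (finito_step alpha gf (x, y) i).1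
                                                 (finito_step alpha gf (x, y) i).2
  <= rho ^+ 2 * finito_lyap alpha p1 p4 gf xstar x y.
Proof.
move=> n0 hcl [hS0 [_ hSg]] hrho hl1 hl2 gam c1 c2 c3 c4 x y.
have nR0 : n%:R != 0 :> R by rewrite pnatr_eq0 -lt0n.
pose v := finito_v alpha x y.
pose gg := fun z => n%:R^-1 *: \sum_(i < n) gf i z.
have hsum0 : \sum_i gf i xstar = 0.
  have := congr1 (fun z => n%:R *: z) hS0; rewrite /= scalerA mulfV // scale1r scaler0.
  by [].
have Cg := hSg v.
have Ci : forall i, 0 <= 2 * gam * L * sqnorm (v - xstar)
       + 2 * (L - gam) * dotv (v - xstar) (gf i v - gf i xstar) - 2 * sqnorm (gf i v - gf i xstar).
  by move=> i; exact: (class_ineq _ _ _ _ _ _ _ (hcl i) xstar v).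
pose Cgx := - (2 * m * L) * sqnorm (v - xstar) + 2 * (L + m) * dotv (v - xstar) (gg v)
         - 2 * sqnorm (gg v).
pose Cix := fun i => 2 * gam * L * sqnorm (v - xstar)
       + 2 * (L - gam) * dotv (v - xstar) (gf i v - gf i xstar) - 2 * sqnorm (gf i v - gf i xstar).
pose LHS1 := n%:R^-1 * \sum_i finito_lyap alpha p1 p4 gf xstar (finito_step alpha gf (x, y) i).1
                                                 (finito_step alpha gf (x, y) i).2.
pose RHS1 := rho ^+ 2 * finito_lyap alpha p1 p4 gf xstar x y.
suff Hneg : LHS1 - RHS1 + lambda1 * Cgx + lambda2 * (n%:R^-1 * \sum_i Cix i) <= 0.
  have h1 : 0 <= lambda1 * Cgx by apply: mulr_ge0.
  have h2 : 0 <= lambda2 * (n%:R^-1 * \sum_i Cix i).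
    apply: mulr_ge0 => //; apply: mulr_ge0; first by rewrite invr_ge0 ler0n.
    by apply: sumr_ge0 => i _; exact: Ci.
  rewrite -/LHS1 -/RHS1; lra.
pose Av := fun i j c => ((finito_step alpha gf (x, y) i).1 j - xstar) 0 c.
pose Bv := fun i j c => ((finito_step alpha gf (x, y) i).2 j - gf j xstar) 0 c.
pose Wv := fun i c => (finito_v alpha (finito_step alpha gf (x, y) i).1
                        (finito_step alpha gf (x, y) i).2 - xstar) 0 c.
pose A0v := fun j c => (x j - xstar) 0 c.
pose B0v := fun j c => (y j - gf j xstar) 0 c.
pose Uv := fun i c => (gf i v - gf i xstar) 0 c.
pose W0v := fun c => (v - xstar) 0 c.
pose Gbv := fun c => (gg v) 0 c.
have E := @exch R n p Av Bv Wv A0v B0v Uv W0v Gbv (n%:R^-1) rho p1 p4 lambda1 lambda2 m L gam.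
have E2 : LHS1 - RHS1 + lambda1 * Cgx + lambda2 * (n%:R^-1 * \sum_i Cix i) = _ := E.
rewrite E2.
pose As := fun i j c => (if j == i then v 0 c else x j 0 c) - xstar 0 c.
pose Bs := fun i j c => (if j == i then gf i v 0 c else y j 0 c) - gf j xstar 0 c.
pose Ws := fun i c => n%:R^-1 * (\sum_j (if j == i then v 0 c else x j 0 c))
               - alpha * (\sum_j (if j == i then gf i v 0 c else y j 0 c)) - xstar 0 c.
pose A0s := fun j c => x j 0 c - xstar 0 c.
pose B0s := fun j c => y j 0 c - gf j xstar 0 c.
pose Us := fun i c => gf i v 0 c - gf i xstar 0 c.
pose W0s := fun c => v 0 c - xstar 0 c.
pose Gbs := fun c => n%:R^-1 * (\sum_i gf i v 0 c).
have eA : Av = As.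
  apply/funext => i; apply/funext => j; apply/funext => k.
  rewrite /Av /As /=; case: (j == i); by rewrite !mxE.
have eB : Bv = Bs.
  apply/funext => i; apply/funext => j; apply/funext => k.
  rewrite /Bv /Bs /= eqxx; case: (j == i); by rewrite !mxE.
have eW : Wv = Ws.
  apply/funext => i; apply/funext => k.
  rewrite /Wv /Ws /finito_v /= !mxE !summxE.
  congr (_ * _ + - (_ * _) + _).
    by apply: eq_bigr => j _; case: (j == i); rewrite // /finito_v !mxE !summxE.
  by apply: eq_bigr => j _; rewrite eqxx; case: (j == i).
have eA0 : A0v = A0s by apply/funext => j; apply/funext => k; rewrite /A0v /A0s !mxE.
have eB0 : B0v = B0s by apply/funext => j; apply/funext => k; rewrite /B0v /B0s !mxE.
have eU : Uv = Us by apply/funext => i; apply/funext => k; rewrite /Uv /Us !mxE.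
have eW0 : W0v = W0s by apply/funext => k; rewrite /W0v /W0s !mxE.
have eGb : Gbv = Gbs by apply/funext => k; rewrite /Gbv /Gbs /gg !mxE summxE.
rewrite eA eB eW eA0 eB0 eU eW0 eGb.
apply: sumr_le0 => k _.
have hS : \sum_j gf j xstar 0 k = 0.
  by have := congr1 (fun M : 'rV[R]_p => M 0 k) hsum0; rewrite /= summxE mxE.
have hV : v 0 k = n%:R^-1 * (\sum_j x j 0 k) - alpha * (\sum_j y j 0 k).
  by rewrite /v /finito_v !mxE !summxE.
exact: (@raw_le R n (fun j => x j 0 k) (fun j => y j 0 k) (fun i => gf i v 0 k)
   (fun j => gf j xstar 0 k) (xstar 0 k) (v 0 k) alpha rho p1 p4 lambda1 lambda2 m L gam
   n0 hrho hl1 c1 c2 c3 c4 hS hV).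
Qed.

Lemma big_tuple_cons (R : realType) (n k : nat) (F : seq 'I_n -> R) :
  \sum_(s : k.+1.-tuple 'I_n) F (tval s) = \sum_i \sum_(s : k.-tuple 'I_n) F (i :: tval s).
Proof.
rewrite pair_big /=.
rewrite (reindex (fun p : 'I_n * k.-tuple 'I_n => [tuple of p.1 :: tval p.2])) /=; last first.
  exists (fun t : k.+1.-tuple 'I_n => (thead t, [tuple of behead t])).
    by move=> [a t] _ /=; congr (_, _); apply: val_inj.
  by move=> t _; apply: val_inj => /=; rewrite [in RHS](tuple_eta t).
by [].
Qed.

Lemma big_tuple0 (R : realType) (n : nat) (F : seq 'I_n -> R) :
  \sum_(s : 0.-tuple 'I_n) F (tval s) = F [::].
Proof.
rewrite (big_pred1 [tuple]) //.
by move=> s; apply/esym/eqP; exact: tuple0.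
Qed.

Lemma exp0 (R : realType) (n : nat) (F : seq 'I_n -> R) : expect_iid_uniform 0 F = F [::].
Proof. by rewrite /expect_iid_uniform big_tuple0 expr0 invr1 mul1r. Qed.

Lemma expS (R : realType) (n k : nat) (F : seq 'I_n -> R) : (0 < n)%N ->
  expect_iid_uniform k.+1 F = n%:R^-1 * \sum_i expect_iid_uniform k (fun s => F (i :: s)).
Proof.
move=> n0; have nR0 : n%:R != 0 :> R by rewrite pnatr_eq0 -lt0n.
rewrite /expect_iid_uniform (@big_tuple_cons R n k F) -mulr_sumr exprS invfM mulrA.
by rewrite [n%:R^-1 * _]mulrC.
Qed.

Theorem corollary4 (R : realType) (n p : nat) (c : fclass)
  (f : 'I_n -> 'rV[R]_p -> R) (gf : 'I_n -> 'rV[R]_p -> 'rV[R]_p)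
  (m L : R) (xstar : 'rV[R]_p)
  (alpha rho p1 p4 lambda1 lambda2 : R) :
  (0 < n)%N ->
  0 < m ->
  (forall i, in_class m L c (f i) (gf i)) ->
  in_S m L (fun x => n%:R^-1 *: \sum_(i < n) gf i x) xstar ->
  0 < alpha ->
  1 - n%:R^-1 <= rho ^+ 2 -> rho ^+ 2 <= 1 ->
  0 < p1 -> 0 < p4 -> 0 <= lambda1 -> 0 <= lambda2 ->
  let gamma := class_gamma m L c in
  alpha ^+ 2 - 2 * lambda2 + p1 < 0 ->
  n%:R * (1 - rho ^+ 2) * p1 - p1 + 2 * alpha ^+ 2
    - 2 * alpha ^+ 4 / (alpha ^+ 2 - 2 * lambda2 + p1) <= 0 ->
  n%:R * (1 - rho ^+ 2) * p4 - p4 + 2 / n%:R ^+ 2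
    - 2 * alpha ^+ 2 / (n%:R ^+ 2 * (alpha ^+ 2 - 2 * lambda2 + p1)) <= 0 ->
  p4 - rho ^+ 2 + 2 * L * gamma * lambda2 - 2 * L * m * lambda1 + 1
    - ((L + m) * lambda1 + (L - gamma) * lambda2 - alpha) ^+ 2
      / (alpha ^+ 2 - 2 * lambda1 - 2 * lambda2 + p1) <= 0 ->
  forall (x0 y0 : 'I_n -> 'rV[R]_p) (k : nat),
    expect_iid_uniform k
      (fun s => let st := finito_iter alpha gf x0 y0 s in
                finito_lyap alpha p1 p4 gf xstar st.1 st.2)
    <= rho ^+ (2 * k) * finito_lyap alpha p1 p4 gf xstar x0 y0.
Proof.
move=> n0 m0 hcl hS a0 hrho hrho1 hp1 hp4 hl1 hl2 gam c1 c2 c3 c4 x0 y0 k.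
have nR : 0 < n%:R :> R by rewrite ltr0n.
have step := @one_step R n p c f gf m L xstar alpha rho p1 p4 lambda1 lambda2
   n0 hcl hS hrho hl1 hl2 c1 c2 c3 c4.
elim: k x0 y0 => [|k IH] x0 y0.
  by rewrite exp0 /= expr0 mul1r.
rewrite expS //.
have S1 : \sum_i expect_iid_uniform k (fun s =>
     let st := finito_iter alpha gf x0 y0 (i :: s) in finito_lyap alpha p1 p4 gf xstar st.1 st.2)
    <= \sum_i rho ^+ (2 * k) *
       finito_lyap alpha p1 p4 gf xstar (finito_step alpha gf (x0, y0) i).1 (finito_step alpha gf (x0, y0) i).2.
  apply: ler_sum => i _.
  exact: (IH (finito_step alpha gf (x0, y0) i).1 (finito_step alpha gf (x0, y0) i).2).
have ni0 : 0 <= n%:R^-1 :> R by rewrite invr_ge0 ler0n.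
apply: (le_trans (ler_wpM2l ni0 S1)).
rewrite -mulr_sumr mulrCA.
have r0 : 0 <= rho ^+ (2 * k) by rewrite exprM exprn_ge0 // sqr_ge0.
apply: (le_trans (ler_wpM2l r0 (step x0 y0))).
by rewrite mulrA -exprD mulnS addnC.
Qed.
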